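(* For every $n\ge1$, the set $\mathfrak S_n(2413,4213)$ is invariant under the modified Foata--Strehl action: for every $\pi\in\mathfrak S_n(2413,4213)$ and every $S\subseteq[n]$, $\varphi'_S(\pi)\in\mathfrak S_n(2413,4213)$.
   Context: $\mathfrak S_n(2413,4213)$ is the set of permutations of $[n]$ with no subsequence order isomorphic to $2413$ or $4213$. For $\pi\in\mathfrak S_n$ use the convention $\pi_0=\pi_{n+1}=-\infty$; the value $x=\pi_i$ is a double ascent if $\pi_{i-1}<\pi_i<\pi_{i+1}$, a double descent if $\pi_{i-1}>\pi_i>\pi_{i+1}$, a peak if $\pi_{i-1}<\pi_i>\pi_{i+1}$, a valley if $\pi_{i-1}>\pi_i<\pi_{i+1}$. For $x\in[n]$, write $\pi=w_1w_2\,x\,w_3w_4$ where $w_2$ (resp. $w_3$) is the maximal (possibly empty) contiguous factor immediately to the left (resp. right) of $x$ all of whose letters exceed $x$, and set $\varphi_x(\pi)=w_1w_3\,x\,w_2w_4$. Define $\varphi'_x(\pi)=\varphi_x(\pi)$ if $x$ is a double ascent or double descent of $\pi$, and $\varphi'_x(\pi)=\pi$ otherwise (peak or valley). These are commuting involutions; for $S\subseteq[n]$, $\varphi'_S=\prod_{x\in S}\varphi'_x$. *)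

(* Defs.v *)
From mathcomp Require Import all_boot.
Set Implicit Arguments. Unset Strict Implicit. Unset Printing Implicit Defensive.

Definition is_perm (n : nat) (s : seq nat) : bool := perm_eq s (iota 1 n).

Definition order_iso (t p : seq nat) : bool :=
  (size t == size p) &&
  [forall i : 'I_(size p), forall j : 'I_(size p),
     (nth 0 t i < nth 0 t j) == (nth 0 p i < nth 0 p j)].

Definition contains (s p : seq nat) : Prop :=
  exists t, subseq t s /\ order_iso t p.

Definition avoids (s p : seq nat) : Prop := ~ contains s p.

Definition Av2413_4213 (n : nat) (s : seq nat) : Prop :=
  is_perm n s /\ avoids s [:: 2; 4; 1; 3] /\ avoids s [:: 4; 2; 1; 3].

(* Foata--Strehl map phi_x: write s = w1 w2 x w3 w4, with w2 (resp. w3) the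
   maximal factor immediately left (resp. right) of x with all letters > x;
   return w1 w3 x w2 w4. *)
Definition phi (x : nat) (s : seq nat) : seq nat :=
  let i := index x s in
  let L := take i s in
  let R := drop i.+1 s in
  let k2 := find (fun y => y <= x) (rev L) in
  let k3 := find (fun y => y <= x) R in
  let w1 := take (size L - k2) L in
  let w2 := drop (size L - k2) L in
  let w3 := take k3 R in
  let w4 := drop k3 R in
  w1 ++ w3 ++ x :: w2 ++ w4.

(* neighbours of x, with the convention pi_0 = pi_{n+1} = -infinity;
   since letters are >= 1, the value 0 plays the role of -infinity *)
Definition left_nb (x : nat) (s : seq nat) : nat :=
  let i := index x s in if i == 0 then 0 else nth 0 s i.-1.
Definition right_nb (x : nat) (s : seq nat) : nat :=
  nth 0 s (index x s).+1.

Definition double_ascent (x : nat) (s : seq nat) : bool :=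
  (left_nb x s < x) && (x < right_nb x s).
Definition double_descent (x : nat) (s : seq nat) : bool :=
  (left_nb x s > x) && (x > right_nb x s).

Definition phi' (x : nat) (s : seq nat) : seq nat :=
  if double_ascent x s || double_descent x s then phi x s else s.

(* phi'_S for a set S of letters, given as a sequence (duplicates and order
   are irrelevant: we apply phi'_x once for each distinct x in S, in
   increasing order of x) *)
Definition phiS (S : seq nat) (s : seq nat) : seq nat :=
  foldr phi' s (sort leq (undup S)).

(* Main.v *)
Require Import Defs.
From mathcomp Require Import all_boot.
From mathcomp Require Import zify.

Module Aux.
Set Implicit Arguments. Unset Strict Implicit. Unset Printing Implicit Defensive.

Definition before (s : seq nat) (y z : nat) : Prop :=
  y \in s /\ z \in s /\ index y s < index z s.

Definition bad (s : seq nat) : Prop :=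
  exists u v c d, c < u /\ u < d /\ d < v /\ before s u c /\ before s v c /\ before s c d.

Lemma notin_l (s t : seq nat) y : uniq (s ++ t) -> y \in t -> y \notin s.
Proof.
rewrite cat_uniq => /and3P [_ H _] yt; apply/negP => ys.
by move/negP: H; apply; apply/hasP; exists y.
Qed.

Lemma subseq_drop_index y t (s : seq nat) :
  subseq (y :: t) s -> y \in s /\ subseq t (drop (index y s).+1 s).
Proof.
elim: s => [|w s IH] //=.
case: ifP => [/eqP <- H | ne H].
  by rewrite inE eqxx /= drop0.
have [Hy Hs] := IH H.
by rewrite inE Hy orbT eq_sym ne.
Qed.

Lemma index_drop_ge (s : seq nat) k z : uniq s -> z \in drop k s -> k <= index z s.
Proof.
move=> Us Hz.
have Hk : k <= size s.
  by case: (leqP k (size s)) => // /ltnW /drop_oversize E; rewrite E in Hz.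
have -> : index z s = index z (take k s ++ drop k s) by rewrite cat_take_drop.
rewrite -(cat_take_drop k s) in Us.
by rewrite index_cat (negbTE (notin_l Us Hz)) size_takel // leq_addr.
Qed.

Lemma pair_before (s : seq nat) y z : uniq s -> subseq [:: y; z] s -> before s y z.
Proof.
move=> Us /subseq_drop_index [Hy]; rewrite sub1seq => Hz.
split => //; split; first exact: mem_drop Hz.
exact: index_drop_ge Us Hz.
Qed.

Lemma subseq_build (s : seq nat) y t k : y \in s -> k <= index y s ->
  subseq t (drop (index y s).+1 s) -> subseq (y :: t) (drop k s).
Proof.
move=> Hy Hk Ht.
have Hi : index y s < size s by rewrite index_mem.
apply: (subseq_trans _ (drop_subseq (drop k s) (index y s - k))).
rewrite drop_drop subnK // (drop_nth 0 Hi) nth_index //= eqxx.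
exact Ht.
Qed.

Lemma index_inj_mem (s : seq nat) y z : y \in s -> index y s = index z s -> y = z.
Proof.
move=> Hy E.
have Hz : z \in s by rewrite -index_mem -E index_mem.
by rewrite -(nth_index 0 Hy) E nth_index.
Qed.

Lemma bad_contains (s : seq nat) : uniq s -> bad s ->
  contains s [:: 2; 4; 1; 3] \/ contains s [:: 4; 2; 1; 3].
Proof.
move=> Us [u [v [c [d H]]]].
case: H => h1 [h2 [h3 [[Hu [Hc Huc]] [[Hv [_ Hvc]] [_ [Hd Hcd]]]]]].
have Hsub : forall a b, a \in s -> b \in s -> index a s < index b s ->
    index b s < index c s -> subseq [:: a; b; c; d] s.
  move=> a b Ha Hb Hab Hbc.
  rewrite -(drop0 s).
  apply: subseq_build => //; apply: subseq_build => //;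
  apply: subseq_build => //; apply: subseq_build => //; exact: sub0seq.
case: (ltngtP (index u s) (index v s)) => Huv.
- left; exists [:: u; v; c; d]; split; first exact: Hsub.
  rewrite /order_iso /=; apply/forallP => i; apply/forallP => j.
  case: i => [[|[|[|[|i]]]] Hi] //; case: j => [[|[|[|[|j]]]] Hj] //=;
    apply/eqP; lia.
- right; exists [:: v; u; c; d]; split; first exact: Hsub.
  rewrite /order_iso /=; apply/forallP => i; apply/forallP => j.
  case: i => [[|[|[|[|i]]]] Hi] //; case: j => [[|[|[|[|j]]]] Hj] //=;
    apply/eqP; lia.
- have := index_inj_mem Hu Huv; lia.
Qed.

Lemma contains_bad (s p : seq nat) : uniq s ->
  (p = [:: 2; 4; 1; 3] \/ p = [:: 4; 2; 1; 3]) -> contains s p -> bad s.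
Proof.
move=> Us Hp [t [Hsub Hiso]].
move: Hiso; rewrite /order_iso => /andP [Hsz /forallP H].
have Hs4 : size p = 4 by case: Hp => ->.
rewrite Hs4 in Hsz.
case: t Hsz Hsub H => [|a [|b [|c [|d [|e t]]]]] // _ Hsub H.
have Bac := pair_before Us (subseq_trans (mask_subseq [:: true; false; true; false] _) Hsub).
have Bbc := pair_before Us (subseq_trans (mask_subseq [:: false; true; true; false] _) Hsub).
have Bcd := pair_before Us (subseq_trans (mask_subseq [:: false; false; true; true] _) Hsub).
case: Hp => Ep; subst p.
- have E20 := eqP (forallP (H (@Ordinal 4 2 isT)) (@Ordinal 4 0 isT)).
  have E03 := eqP (forallP (H (@Ordinal 4 0 isT)) (@Ordinal 4 3 isT)).
  have E31 := eqP (forallP (H (@Ordinal 4 3 isT)) (@Ordinal 4 1 isT)).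
  simpl in E20, E03, E31.
  have g1 : c < a by rewrite E20.
  have g2 : a < d by rewrite E03.
  have g3 : d < b by rewrite E31.
  exists a, b, c, d; do 3 (split; first by lia); done.
- have E21 := eqP (forallP (H (@Ordinal 4 2 isT)) (@Ordinal 4 1 isT)).
  have E13 := eqP (forallP (H (@Ordinal 4 1 isT)) (@Ordinal 4 3 isT)).
  have E30 := eqP (forallP (H (@Ordinal 4 3 isT)) (@Ordinal 4 0 isT)).
  simpl in E21, E13, E30.
  have g1 : c < b by rewrite E21.
  have g2 : b < d by rewrite E13.
  have g3 : d < a by rewrite E30.
  exists b, a, c, d; do 3 (split; first by lia); done.
Qed.

Ltac slia := repeat match goal with
  | H : is_true (_ \in _) |- _ => clear H
  | H : is_true (_ \notin _) |- _ => clear H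
  | H : is_true (uniq _) |- _ => clear H
  | H : is_true (all _ _) |- _ => clear H
  end; lia.

Section Core.
Variables (A B C : seq nat) (x : nat).
Hypothesis U : uniq (A ++ B ++ x :: C).
Hypothesis HB : all (fun z => x < z) B.
Local Notation s1 := (A ++ B ++ x :: C).
Local Notation s2 := (A ++ x :: B ++ C).

Lemma U2 : uniq (B ++ x :: C).
Proof. by move: U; rewrite cat_uniq => /and3P []. Qed.
Lemma xC : x \notin C.
Proof.
have U3 : uniq (x :: C) by move: U2; rewrite cat_uniq => /and3P [].
by move: U3; rewrite cons_uniq => /andP [].
Qed.
Lemma xB : x \notin B.
Proof. by apply: (notin_l U2); rewrite inE eqxx. Qed.
Lemma xA : x \notin A.
Proof. by apply: (notin_l U); rewrite mem_cat inE eqxx orbT. Qed.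

Lemma mem12 y : (y \in s1) = (y \in s2).
Proof. by rewrite !mem_cat !inE !mem_cat; case: (y \in A); case: (y \in B); case: (y == x). Qed.

Lemma idx_x : index x s1 = size A + size B /\ index x s2 = size A.
Proof.
split; last by rewrite index_pivot // xA.
rewrite catA index_pivot ?size_cat //; by rewrite mem_cat negb_or xA xB.
Qed.

Lemma seg (y : nat) : y \in s1 -> y != x ->
  [\/ [/\ y \in A, index y s1 < size A & index y s2 = index y s1],
      [/\ x < y, size A <= index y s1, index y s1 < size A + size B &
          index y s2 = (index y s1).+1] |
      [/\ y \in C, size A + size B < index y s1 & index y s2 = index y s1]].
Proof.
move=> Hy ynx.
rewrite !index_cat.
move: Hy; rewrite !mem_cat inE => /or4P [yA | yB | /eqP yx | yC].
- have Hi : index y A < size A by rewrite index_mem.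
  by rewrite yA; apply: Or31; split.
- have yA : y \notin A by apply: (notin_l U); rewrite mem_cat yB.
  have xy : x < y by move/allP: HB; apply.
  rewrite (negbTE yA) yB /=.
  have -> : (x == y) = false by apply/negbTE; rewrite neq_ltn xy.
  rewrite index_cat yB.
  have Hi : index y B < size B by rewrite index_mem.
  apply: Or32; split; try lia.
- by rewrite yx eqxx in ynx.
- have yA : y \notin A by apply: (notin_l U); rewrite !mem_cat inE yC !orbT.
  have yB : y \notin B by apply: (notin_l U2); rewrite inE yC orbT.
  have yx : (x == y) = false by rewrite eq_sym; apply/negbTE.
  rewrite (negbTE yA) (negbTE yB) /= yx index_cat (negbTE yB).
  apply: Or33; split => //; [lia | by rewrite [in RHS]addnS].
Qed.

Lemma pair12 (y z : nat) : y \in s1 -> z \in s1 -> index y s1 < index z s1 ->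
  ~~ ((z == x) && (x < y)) -> index y s2 < index z s2.
Proof.
move=> Hy Hz Hyz Hc.
have [Ix1 Ix2] := idx_x.
case: (eqVneq y x) => [Eyx | nyx].
  subst y; case: (eqVneq z x) => [Ezx | nzx]; first by subst; lia.
  case: (seg Hz nzx) => [[_ h1 h2]|[_ h1 h2 h3]|[_ h1 h2]]; lia.
case: (eqVneq z x) => [Ezx | nzx].
  subst z; case: (seg Hy nyx) => [[_ h1 h2]|[h0 h1 h2 h3]|[_ h1 h2]]; try lia.
case: (seg Hy nyx) => [[_ h1 h2]|[h0 h1 h2 h3]|[_ h1 h2]];
case: (seg Hz nzx) => [[_ g1 g2]|[g0 g1 g2 g3]|[_ g1 g2]]; lia.
Qed.

Lemma pair21 (y z : nat) : y \in s1 -> z \in s1 -> index y s2 < index z s2 ->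
  ~~ [&& y == x, x < z & index z s2 <= size A + size B] ->
  index y s1 < index z s1.
Proof.
move=> Hy Hz Hyz Hc.
have [Ix1 Ix2] := idx_x.
case: (eqVneq y x) => [Eyx | nyx].
  subst y; case: (eqVneq z x) => [Ezx | nzx]; first by subst; lia.
  case: (seg Hz nzx) => [[_ h1 h2]|[h0 h1 h2 h3]|[_ h1 h2]]; try lia.
case: (eqVneq z x) => [Ezx | nzx].
  subst z; case: (seg Hy nyx) => [[_ h1 h2]|[h0 h1 h2 h3]|[_ h1 h2]]; lia.
case: (seg Hy nyx) => [[_ h1 h2]|[h0 h1 h2 h3]|[_ h1 h2]];
case: (seg Hz nzx) => [[_ g1 g2]|[g0 g1 g2 g3]|[_ g1 g2]]; lia.
Qed.

Lemma idx_head : C != [::] ->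
  [/\ head 0 C \in C, index (head 0 C) s1 = size A + size B + 1 &
      index (head 0 C) s2 = size A + size B + 1].
Proof.
move: U; case: C => [|c0 C'] // U' _ /=.
have E1 : A ++ B ++ x :: c0 :: C' = (A ++ B ++ [:: x]) ++ c0 :: C' by rewrite -!catA.
have E2 : A ++ x :: B ++ c0 :: C' = (A ++ x :: B) ++ c0 :: C' by rewrite -!catA.
have N1 : c0 \notin A ++ B ++ [:: x].
  by apply: (notin_l (s := A ++ B ++ [:: x]) (t := c0 :: C')); rewrite -?E1 // mem_head.
have N2 : c0 \notin A ++ x :: B.
  by move: N1; rewrite !mem_cat !inE; case: (c0 \in A); case: (c0 \in B); case: (c0 == x).
rewrite E1 E2 !index_pivot // !size_cat /= mem_head; split => //; lia.
Qed.

Lemma idx_last : A != [::] ->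
  [/\ last 0 A \in A, index (last 0 A) s1 = (size A).-1 &
      index (last 0 A) s2 = (size A).-1].
Proof.
move: U; case/lastP: A => [|A' a0] // U' _.
rewrite last_rcons mem_rcons mem_head size_rcons /= !cat_rcons.
rewrite cat_rcons in U'.
have N : a0 \notin A' by apply: (notin_l U'); rewrite mem_head.
by rewrite !index_pivot.
Qed.

Lemma dir1 : head 0 C <= x -> bad s1 -> bad s2.
Proof.
move=> hC [u [v [c [d H]]]].
case: H => h1 [h2 [h3 [[Hu [Hc Huc]] [[Hv [_ Hvc]] [_ [Hd Hcd]]]]]].
have [Ix1 Ix2] := idx_x.
case: (eqVneq c x) => [Ecx | ncx].
- subst c.
  have ndx : d != x by apply/eqP; slia.
  case: (seg Hd ndx) => [[_ g1 _]|[_ _ g2 _]|[dC g1 g2]]; try slia.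
  have nzC : C != [::] by apply/eqP => E; rewrite E in dC.
  have [c0C Ic1 Ic2] := idx_head nzC.
  set c0 := head 0 C in c0C Ic1 Ic2 hC.
  have c0x : c0 != x by apply/eqP => E; move: xC; rewrite -E c0C.
  have c0s : c0 \in s1 by rewrite !mem_cat inE c0C !orbT.
  have dc0 : index d s1 != index c0 s1.
    by apply/eqP => /(index_inj_mem Hd) E; move: h2; rewrite E; slia.
  have nux : u != x by apply/eqP; slia.
  have nvx : v != x by apply/eqP; slia.
  exists u, v, c0, d; do 3 (split; first by slia).
  split; last split.
  + split; first by rewrite -mem12. split; first by rewrite -mem12.
    case: (seg Hu nux) => [[_ f1 f2]|[_ f1 f2 f3]|[_ f1 f2]]; slia.
  + split; first by rewrite -mem12. split; first by rewrite -mem12.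
    case: (seg Hv nvx) => [[_ f1 f2]|[_ f1 f2 f3]|[_ f1 f2]]; slia.
  + split; first by rewrite -mem12. split; first by rewrite -mem12.
    slia.
- exists u, v, c, d; do 3 (split; first by slia).
  split; last split.
  + do 2 (split; first by rewrite -mem12). apply: pair12 => //. slia.
  + do 2 (split; first by rewrite -mem12). apply: pair12 => //. slia.
  + do 2 (split; first by rewrite -mem12). apply: pair12 => //. slia.
Qed.

Lemma dir2 : last 0 A <= x -> bad s2 -> bad s1.
Proof.
move=> hA [u [v [c [d H]]]].
case: H => h1 [h2 [h3 [[Hu [Hc Huc]] [[Hv [_ Hvc]] [_ [Hd Hcd]]]]]].
rewrite -!mem12 in Hu Hv Hc Hd.
have [Ix1 Ix2] := idx_x.
case: (boolP [&& c == x, x < d & index d s2 <= size A + size B]) => Halt.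
- case/and3P: Halt => /eqP Ecx xd dle; subst c.
  have ndx : d != x by apply/eqP; slia.
  have nux : u != x by apply/eqP; slia.
  have nvx : v != x by apply/eqP; slia.
  have pA : 0 < size A.
    by case: (seg Hu nux) => [[_ f1 f2]|[_ f1 f2 f3]|[_ f1 f2]]; slia.
  have nzA : A != [::] by rewrite -size_eq0 -lt0n.
  have [a0A Ia1 Ia2] := idx_last nzA.
  set a0 := last 0 A in a0A Ia1 Ia2 hA.
  have a0x : a0 != x by apply/eqP => E; move: xA; rewrite -E a0A.
  have a0s : a0 \in s1 by rewrite !mem_cat a0A.
  have ua0 : index u s1 != index a0 s1.
    by apply/eqP => /(index_inj_mem Hu) E; move: h1; rewrite E; slia.
  have va0 : index v s1 != index a0 s1.
    by apply/eqP => /(index_inj_mem Hv) E; move: h3; rewrite E; slia.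
  exists u, v, a0, d; do 3 (split; first by slia).
  split; last split.
  + do 2 (split => //).
    case: (seg Hu nux) => [[_ f1 f2]|[_ f1 f2 f3]|[_ f1 f2]]; slia.
  + do 2 (split => //).
    case: (seg Hv nvx) => [[_ f1 f2]|[_ f1 f2 f3]|[_ f1 f2]]; slia.
  + do 2 (split => //).
    case: (seg Hd ndx) => [[_ f1 f2]|[_ f1 f2 f3]|[_ f1 f2]]; slia.
- exists u, v, c, d; do 3 (split; first by slia).
  split; last split.
  + do 2 (split => //). apply: pair21 => //. slia.
  + do 2 (split => //). apply: pair21 => //. slia.
  + do 2 (split => //). exact: pair21.
Qed.

End Core.

Lemma all_take_find (x : nat) (R : seq nat) :
  all (fun y => x < y) (take (find (fun y => y <= x) R) R).
Proof.
elim: R => [|y R IH] //=.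
case: ifP => //= hy; rewrite IH andbT; lia.
Qed.

Lemma hdf (x : nat) (R : seq nat) :
  head 0 (drop (find (fun y => y <= x) R) R) <= x.
Proof.
elim: R => [|y R IH] //=.
by case: ifP => //= hy; rewrite drop0.
Qed.

Lemma last_head_rev (s : seq nat) : last 0 s = head 0 (rev s).
Proof. by case/lastP: s => [|s a] //; rewrite rev_rcons last_rcons. Qed.

Lemma perm_swap (A B C : seq nat) x : perm_eq (A ++ B ++ x :: C) (A ++ x :: B ++ C).
Proof. by rewrite perm_cat2l -cat1s perm_catCA. Qed.

Lemma core_iff (A B C : seq nat) x : uniq (A ++ B ++ x :: C) ->
  all (fun z => x < z) B -> last 0 A <= x -> head 0 C <= x ->
  (bad (A ++ B ++ x :: C) <-> bad (A ++ x :: B ++ C)).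
Proof.
move=> U HB hA hC; split; [exact: dir1 | exact: dir2].
Qed.

Lemma split_at (s : seq nat) x : x \in s ->
  s = take (index x s) s ++ x :: drop (index x s).+1 s.
Proof.
move=> xs.
have Hi : index x s < size s by rewrite index_mem.
have E := drop_nth x Hi; rewrite nth_index // in E.
by rewrite -E cat_take_drop.
Qed.

Lemma phi_cases (s : seq nat) x : uniq s -> x \in s ->
  (double_ascent x s || double_descent x s) ->
  perm_eq (phi x s) s /\ (bad (phi x s) <-> bad s).
Proof.
move=> Us xs Hd.
set i := index x s.
set L := take i s.
set R := drop i.+1 s.
have Es : s = L ++ x :: R by exact: split_at.
have Hi : i < size s by rewrite index_mem.
have sL : size L = i by rewrite size_takel // ltnW.
have Hl : left_nb x s = last 0 L.
  rewrite /left_nb -/i /L; case: eqP => [->|ne]; first by rewrite take0.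
  rewrite -nth_last size_takel ?(ltnW Hi) // nth_take //; lia.
have Hr : right_nb x s = head 0 R.
  by rewrite /right_nb -/i /R -nth0 nth_drop addn0.
have Ephi : phi x s = take (size L - find (fun y => y <= x) (rev L)) L ++
   take (find (fun y => y <= x) R) R ++ x ::
   drop (size L - find (fun y => y <= x) (rev L)) L ++
   drop (find (fun y => y <= x) R) R by [].
case/orP: Hd => /andP [h1 h2]; rewrite Hl in h1; rewrite Hr in h2.
-
  have k2 : find (fun y => y <= x) (rev L) = 0.
    by move: h1; case/lastP: (L) => [|L' l] //=; rewrite rev_rcons last_rcons /= => hl; rewrite (ltnW hl).
  rewrite Ephi k2 subn0 take_size drop_size cat0s.
  set k3 := find (fun y => y <= x) R.
  have ER : R = take k3 R ++ drop k3 R by rewrite cat_take_drop.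
  have Es2 : s = L ++ x :: take k3 R ++ drop k3 R by rewrite -ER.
  have P := perm_swap L (take k3 R) (drop k3 R) x.
  split; first by rewrite Es2.
  rewrite [in X in _ <-> X]Es2; apply: core_iff.
  + by rewrite (perm_uniq P) -Es2.
  + exact: all_take_find.
  + lia.
  + exact: hdf.
-
  have k3 : find (fun y => y <= x) R = 0.
    by move: h2; case: (R) => [|r R'] //= => hr; rewrite (ltnW hr).
  rewrite Ephi k3 take0 drop0 cat0s.
  set k2 := find (fun y => y <= x) (rev L).
  set w1 := take (size L - k2) L.
  set w2 := drop (size L - k2) L.
  have Es2 : s = w1 ++ w2 ++ x :: R by rewrite catA cat_take_drop.
  have P := perm_swap w1 w2 R x.
  split; first by rewrite Es2 perm_sym.
  rewrite [in X in _ <-> X]Es2; symmetry; apply: core_iff.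
  + by rewrite -Es2.
  + by rewrite -all_rev /w2 -take_rev all_take_find.
  + by rewrite last_head_rev /w1 -drop_rev hdf.
  + lia.
Qed.

Lemma Av_iff n s : Av2413_4213 n s <-> is_perm n s /\ ~ bad s.
Proof.
have Uu : is_perm n s -> uniq s.
  by move=> P; rewrite (perm_uniq P) iota_uniq.
split.
- move=> [P [A1 A2]]; split => // Hb.
  by case: (bad_contains (Uu P) Hb).
- move=> [P Nb]; split => //; split => Hc; apply: Nb.
  + exact: (contains_bad (Uu P) (or_introl erefl) Hc).
  + exact: (contains_bad (Uu P) (or_intror erefl) Hc).
Qed.

Lemma step n s x : Av2413_4213 n s -> x \in iota 1 n -> Av2413_4213 n (phi' x s).
Proof.
move=> /Av_iff [P Nb] xi.
rewrite /phi'; case: ifP => Hd; last by apply/Av_iff.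
have Us : uniq s by rewrite (perm_uniq P) iota_uniq.
have xs : x \in s by rewrite (perm_mem P).
have [P' E] := phi_cases Us xs Hd.
apply/Av_iff; split.
- exact: perm_trans P' P.
- by rewrite E.
Qed.

End Aux.
Import Aux.

Theorem lemma4p8 (n : nat) (pi S : seq nat) :
  1 <= n ->
  Av2413_4213 n pi ->
  {subset S <= iota 1 n} ->
  Av2413_4213 n (phiS S pi).
Proof.
move=> _ Hpi HS.
rewrite /phiS.
have : {subset sort leq (undup S) <= iota 1 n}.
  by move=> y; rewrite mem_sort mem_undup; apply: HS.
elim: (sort leq (undup S)) => [|y l IH] Hl //=.
apply: step; last by apply: Hl; rewrite mem_head.
by apply: IH => z zl; apply: Hl; rewrite inE zl orbT.
Qed.
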